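(* Let $p\ge1$ and let $q\in[1,\infty]$ satisfy $\frac1p+\frac1q=1$. Then the function $f(\mathbf s,\mathbf u)$ is continuous on $\mathcal S\times\mathcal U$. Additionally, for any fixed $\mathbf s\in\mathcal S$, $f(\mathbf s,\mathbf u)$ is Lipschitz continuous in $\mathbf u$ with respect to $\|\cdot\|_p$, with Lipschitz constant $L:=\max_{\mathbf y\in\mathcal Y}\|\mathbf y\|_q<\infty$.
   Context: $n\ge1$, $T>0$, $\mathcal S=\{\mathbf s\in\mathbb R^n:\mathbf s\ge0,\sum_is_i\le T\}$; $\mathcal U\subseteq\mathbb R^n$ is the support set of the service durations. Costs $\mathbf c,\mathbf d\in\mathbb R^n_+$, $C\ge0$ with $d_{i+1}-d_i\le c_{i+1}$ for $i=1,\dots,n-1$. $f(\mathbf s,\mathbf u)$ is the optimal value of $\min_{\mathbf w\in\mathbb R^{n+1},\mathbf v\in\mathbb R^n}\sum_{i=1}^n(c_iw_i+d_iv_i)+Cw_{n+1}$ s.t. $w_i-v_{i-1}=u_{i-1}+w_{i-1}-s_{i-1}$ ($i=2,\dots,n+1$), $\mathbf w\ge0,w_1=0,\mathbf v\ge0$. $\mathcal Y=\{\mathbf y\in\mathbb R^n:-y_i\le d_i\ \forall i;\ y_{i-1}-y_i\le c_i\ (i=2,\dots,n);\ y_n\le C\}$. *)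

(* Defs.v *)
From HB Require Import structures.
From mathcomp Require Import all_boot all_order all_algebra.
From mathcomp Require Import all_classical all_reals all_analysis.
Set Implicit Arguments. Unset Strict Implicit. Unset Printing Implicit Defensive.
Import Order.TTheory GRing.Theory Num.Theory.
Import numFieldNormedType.Exports.
Local Open Scope classical_set_scope.
Local Open Scope ring_scope.

(* Indexing convention: paper index i in {1..n} corresponds to k = i-1 in 'I_n
   (or in nat for the decision variables w, v); w_{n+1} is w n. *)

Section Defs.
Variable R : realType.
Variable n : nat.

Definition Sset (T : R) : set 'rV[R]_n :=
  [set s | (forall i : 'I_n, 0 <= s ord0 i) /\ \sum_(i < n) s ord0 i <= T].

Definition lp_feasible (s u : 'rV[R]_n) (w v : nat -> R) : Prop :=
  w 0%N = 0 /\
  (forall k : nat, (k <= n)%N -> 0 <= w k) /\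
  (forall k : 'I_n, 0 <= v k) /\
  (forall k : 'I_n, w k.+1 - v k = u ord0 k + w k - s ord0 k).

Definition lp_obj (c d : 'rV[R]_n) (C : R) (w v : nat -> R) : R :=
  \sum_(k < n) (c ord0 k * w k + d ord0 k * v k) + C * w n.

Definition fval (c d : 'rV[R]_n) (C : R) (s u : 'rV[R]_n) : R :=
  inf [set x | exists w v, lp_feasible s u w v /\ x = lp_obj c d C w v].

Definition Yset (c d : 'rV[R]_n) (C : R) : set 'rV[R]_n :=
  [set y | (forall i : 'I_n, - y ord0 i <= d ord0 i) /\
           (forall i j : 'I_n, val j = (val i).+1 -> y ord0 i - y ord0 j <= c ord0 j) /\
           (forall i : 'I_n, (val i).+1 = n -> y ord0 i <= C)].

(* l_q norm for q in [1, +oo] (an extended real); -oo is meaningless, set to 0 *)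
Definition lqnorm (q : \bar R) (x : 'rV[R]_n) : R :=
  match q with
  | EFin r => (\sum_(i < n) `|x ord0 i| `^ r) `^ r^-1
  | +oo%E => \big[Num.max/0]_(i < n) `|x ord0 i|
  | -oo%E => 0
  end.

End Defs.

(* Main.v *)
Require Import Defs.
From HB Require Import structures.
From mathcomp Require Import all_boot all_order all_algebra.
From mathcomp Require Import all_classical all_reals all_analysis.
From mathcomp Require Import ring lra zify.
Import Order.TTheory GRing.Theory Num.Theory.
Import numFieldNormedType.Exports.
Local Open Scope classical_set_scope.
Local Open Scope ring_scope.

Set Implicit Arguments. Unset Strict Implicit. Unset Printing Implicit Defensive.

Section LP.
Variable R : realType.
Variable n : nat.
Variables (c d : nat -> R) (C : R).

Definition feasN (x w v : nat -> R) : Prop :=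
  w 0%N = 0 /\ (forall k, (k <= n)%N -> 0 <= w k) /\
  (forall k, (k < n)%N -> 0 <= v k) /\
  (forall k, (k < n)%N -> w k.+1 - v k = x k + w k).

Definition objN m (Cm : R) (w v : nat -> R) : R :=
  \sum_(0 <= k < m) (c k * w k + d k * v k) + Cm * w m.

Definition dualN m (Cm : R) (y : nat -> R) : Prop :=
  (forall k, (k < m)%N -> - y k <= d k) /\
  (forall k, (k.+1 < m)%N -> y k - y k.+1 <= c k.+1) /\
  ((0 < m)%N -> y m.-1 <= Cm).

Definition dotN m (y x : nat -> R) : R := \sum_(0 <= k < m) y k * x k.

Lemma weak_dual x w v : feasN x w v -> forall m Cm y, (m <= n)%N ->
  dualN m Cm y -> dotN m y x <= objN m Cm w v.
Proof.
move=> [w0 [wge [vge eq]]]; elim=> [|m IH] Cm y mn [d1 [d2 d3]].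
  by rewrite /dotN /objN !big_geq // w0 mulr0 addr0.
have H : dualN m (y m + c m) y.
  split; first by move=> k km; apply: d1; exact: ltnW.
  split; first by move=> k km; apply: d2; exact: ltnW.
  case: m {IH mn d1 d2 d3} (d2 m.-1) => [//|m] /= h _.
  by have := h (ltnSn _); lra.
have := IH _ _ (ltnW mn) H.
rewrite /dotN /objN !big_nat_recr //=.
have e := eq m mn.
have h1 : 0 <= (d m + y m) * v m.
  by apply: mulr_ge0; [have := d1 m (ltnSn _); lra | exact: vge].
have h2 : 0 <= (Cm - y m) * w m.+1.
  by apply: mulr_ge0; [have := d3 (ltn0Sn _); rewrite /=; lra | exact: wge].
have -> : x m = w m.+1 - v m - w m by lra.
nra.
Qed.

Fixpoint wg (x : nat -> R) k : R :=
  if k is k'.+1 then Num.max (wg x k' + x k') 0 else 0.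
Definition vg (x : nat -> R) k : R := Num.max (- (wg x k + x k)) 0.

Lemma greedy_feas x : feasN x (wg x) (vg x).
Proof.
split; first by [].
split; first by case=> [|k] _ //=; rewrite le_max lexx orbT.
split; first by move=> k _; rewrite /vg le_max lexx orbT.
move=> k _ /=; rewrite /vg.
case: (lerP 0 (wg x k + x k)) => h.
  rewrite (max_idPr _); lra.
rewrite (max_idPl _); lra.
Qed.

Hypothesis hd : forall k, (k.+1 < n)%N -> d k.+1 - d k <= c k.+1.

Lemma strong_dual x : forall m, (m <= n)%N -> forall Cm,
  ((0 < m)%N -> - d m.-1 <= Cm) ->
  exists y, dualN m Cm y /\ objN m Cm (wg x) (vg x) = dotN m y x.
Proof.
have [w0 [wge [vge eq]]] := greedy_feas x.
elim=> [|m IH] mn Cm hC.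
  exists (fun=> 0); split; first by split=> // k.
  by rewrite /dotN /objN !big_geq // mulr0 addr0.
pose ym := if (0 < wg x m.+1) then Cm else - d m.
have ymge : - d m <= ym.
  by rewrite /ym; case: ifP => _ //; exact: hC.
have [y [[d1 [d2 d3]] ob]] : exists y, dualN m (ym + c m) y /\
   objN m (ym + c m) (wg x) (vg x) = dotN m y x.
  apply: IH; first exact: ltnW.
  move=> m0; have := hd (k := m.-1); rewrite prednK // => /(_ mn); lra.
exists (fun k => if k == m then ym else y k); split.
  split.
    move=> k; rewrite ltnS leq_eqVlt; case/orP => [/eqP->|km].
      by rewrite eqxx; lra.
    by rewrite (ltn_eqF km); apply: d1.
  split.
    move=> k; rewrite ltnS => km.
    rewrite (ltn_eqF km).
    move: km; rewrite leq_eqVlt; case/orP => [/eqP km|km].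
      rewrite km eqxx.
      have := d3; rewrite -km /= => /(_ isT); lra.
    rewrite (ltn_eqF km); exact: d2.
  move=> _ /=; rewrite eqxx /ym; case: ifP => _ //; exact: hC.
rewrite /dotN /objN [in RHS]big_nat_recr // eqxx.
rewrite (@eq_big_nat _ _ _ 0 m _ (fun k => y k * x k)); last first.
  by move=> k /andP[_ km]; rewrite (ltn_eqF km).
move: ob; rewrite /dotN /objN => <-.
rewrite big_nat_recr //.
have e := eq m mn.
have hz : (d m + ym) * vg x m + (Cm - ym) * wg x m.+1 = 0.
  rewrite /ym; case: ifP => h.
    have -> : vg x m = 0.
      rewrite /vg; apply/max_idPr; move: h => /=.
      case: (lerP 0 (wg x m + x m)) => h2; first lra.
      by rewrite ltxx.
    by rewrite subrr mulr0 mul0r addr0.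
  have -> : wg x m.+1 = 0.
    apply/eqP; rewrite eq_le wge // andbT.
    by rewrite leNgt h.
  by rewrite addrN mul0r mulr0 addr0.
have -> : x m = wg x m.+1 - vg x m - wg x m by lra.
apply/eqP; rewrite -subr_eq0 -[X in _ == X]hz; apply/eqP; rewrite /=; ring.
Qed.


End LP.

Definition nf (R : realType) n (a : 'rV[R]_n) (k : nat) : R :=
  if insub k is Some i then a ord0 i else 0.

Lemma nfE (R : realType) n (a : 'rV[R]_n) (i : 'I_n) : nf a (val i) = a ord0 i.
Proof. by rewrite /nf valK. Qed.

Section Conn.
Variables (R : realType) (n : nat) (c d : 'rV[R]_n) (C : R).
Hypothesis hC : 0 <= C.
Hypothesis hd0 : forall i : 'I_n, 0 <= d ord0 i.
Hypothesis hcd : forall i j : 'I_n, val j = (val i).+1 -> d ord0 j - d ord0 i <= c ord0 j.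


Lemma sum_nf (F : nat -> R) : \sum_(0 <= k < n) F k = \sum_(i < n) F (val i).
Proof. by rewrite big_mkord. Qed.

Lemma feas_to (s u : 'rV[R]_n) (w v : nat -> R) : lp_feasible s u w v ->
  feasN n (fun k => nf u k - nf s k) w v.
Proof.
move=> [w0 [wge [vge eq]]]; split=> //; split=> //; split.
  by move=> k kn; have := vge (Ordinal kn).
move=> k kn; have := eq (Ordinal kn).
have := nfE u (Ordinal kn); have := nfE s (Ordinal kn); rewrite /= => -> ->.
lra.
Qed.

Lemma feas_from (s u : 'rV[R]_n) (w v : nat -> R) : feasN n (fun k => nf u k - nf s k) w v ->
  lp_feasible s u w v.
Proof.
move=> [w0 [wge [vge eq]]]; split=> //; split=> //; split.
  by move=> k; apply: vge.
move=> k; have := eq k (ltn_ord k).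
rewrite !nfE; lra.
Qed.

Lemma obj_eq (w v : nat -> R) : lp_obj c d C w v = objN (nf c) (nf d) n C w v.
Proof.
by rewrite /lp_obj /objN sum_nf; congr (_ + _); apply: eq_bigr => i _;
  rewrite !nfE.
Qed.

Lemma Y_to (y : 'rV[R]_n) : Yset c d C y -> dualN (nf c) (nf d) n C (nf y).
Proof.
move=> [y1 [y2 y3]]; split.
  by move=> k kn; have := y1 (Ordinal kn); rewrite -!(nfE _ (Ordinal kn)).
split.
  move=> k kn; have kn' : (k < n)%N by apply: ltn_trans kn.
  have := y2 (Ordinal kn') (Ordinal kn) erefl.
  by rewrite -!(nfE _ (Ordinal kn)) -(nfE _ (Ordinal kn')).
move=> n0; have nn : (n.-1 < n)%N by rewrite prednK.
have := y3 (Ordinal nn); rewrite /= prednK // => /(_ erefl).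
by rewrite -(nfE _ (Ordinal nn)).
Qed.

Lemma Y_from (y : nat -> R) : dualN (nf c) (nf d) n C y -> Yset c d C (\row_(i < n) y (val i)).
Proof.
move=> [y1 [y2 y3]]; split.
  move=> i; rewrite mxE -(nfE d); apply: y1; exact: ltn_ord.
split.
  move=> i j ij; rewrite !mxE -(nfE c) ij; apply: y2; rewrite -ij; exact: ltn_ord.
move=> i iS; rewrite mxE.
have e : val i = n.-1 := congr1 predn iS.
rewrite e; apply: y3; exact: (leq_ltn_trans (leq0n _) (ltn_ord i)).
Qed.

Lemma fval_dual (s u : 'rV[R]_n) :
  (exists y, Yset c d C y /\
     fval c d C s u = \sum_(i < n) y ord0 i * (u ord0 i - s ord0 i)) /\
  (forall y, Yset c d C y ->
     \sum_(i < n) y ord0 i * (u ord0 i - s ord0 i) <= fval c d C s u).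
Proof.
pose x k := nf u k - nf s k.
have hd : forall k, (k.+1 < n)%N -> (nf d) k.+1 - (nf d) k <= (nf c) k.+1.
  move=> k kn; have kn' : (k < n)%N by apply: ltn_trans kn.
  have := @hcd (Ordinal kn') (Ordinal kn) erefl.
  by rewrite -!(nfE _ (Ordinal kn)) -(nfE _ (Ordinal kn')).
have nfd0 k : 0 <= nf d k by rewrite /nf; case: insub.
have [y [yd yo]] : exists y, dualN (nf c) (nf d) n C y /\ objN (nf c) (nf d) n C (wg x) (vg x) = dotN n y x.
  apply: (@strong_dual R n (nf c) (nf d) hd x n (leqnn n) C) => _.
  by apply: le_trans hC; rewrite oppr_le0; exact: nfd0.
have dotE (z : 'rV[R]_n) : dotN n (nf z) x =
    \sum_(i < n) z ord0 i * (u ord0 i - s ord0 i).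
  by rewrite /dotN sum_nf; apply: eq_bigr => i _; rewrite /x !nfE.
pose yr := \row_(i < n) y (val i).
have yrY : Yset c d C yr by apply: Y_from.
have dotyr : dotN n y x = \sum_(i < n) yr ord0 i * (u ord0 i - s ord0 i).
  by rewrite /dotN sum_nf; apply: eq_bigr => i _; rewrite /x !nfE mxE.
set E := [set z | exists w v, lp_feasible s u w v /\ z = lp_obj c d C w v].
have Eo : E (lp_obj c d C (wg x) (vg x)).
  exists (wg x), (vg x); split=> //; apply: feas_from; exact: greedy_feas.
have lbE (z : 'rV[R]_n) : Yset c d C z ->
    lbound E (\sum_(i < n) z ord0 i * (u ord0 i - s ord0 i)).
  move=> zY e [w [v [f ->]]]; rewrite -dotE obj_eq.
  apply: weak_dual (leqnn n) (Y_to zY); exact: feas_to.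
have fE : fval c d C s u = \sum_(i < n) yr ord0 i * (u ord0 i - s ord0 i).
  rewrite /fval -/E; apply/eqP; rewrite eq_le; apply/andP; split.
    rewrite -dotyr -yo -obj_eq; apply: ge_inf => //.
    by exists (\sum_(i < n) yr ord0 i * (u ord0 i - s ord0 i)); apply: lbE.
  by apply: lb_le_inf; [exists (lp_obj c d C (wg x) (vg x)) | apply: lbE].
split; first by exists yr.
move=> z zY; rewrite /fval -/E; apply: lb_le_inf; first by exists (lp_obj c d C (wg x) (vg x)).
exact: lbE.
Qed.

Hypothesis hc0 : forall i : 'I_n, 0 <= c ord0 i.

Lemma Y_bound (y : 'rV[R]_n) : Yset c d C y -> forall i : 'I_n,
  `|y ord0 i| <= C + \sum_(j < n) c ord0 j + \sum_(j < n) d ord0 j.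
Proof.
move=> yY; have [y1 [y2 y3]] := Y_to yY.
have nfc0 k : 0 <= nf c k by rewrite /nf; case: insub.
have up : forall m k, (k < n)%N -> (n - k = m.+1)%N ->
    nf y k <= C + \sum_(k.+1 <= j < n) nf c j.
  elim=> [|m IH] k kn nk.
    have e : k = n.-1 by lia.
    rewrite big_geq; last by lia.
    by rewrite addr0 e; apply: y3; lia.
  have k1 : (k.+1 < n)%N by lia.
  have := IH k.+1 k1 ltac:(lia); have := y2 k k1.
  rewrite (big_ltn k1); lra.
move=> i; have io := ltn_ord i; have := up (n - i.+1)%N i io ltac:(lia).
have := y1 _ (ltn_ord i); rewrite !nfE => h1 h2.
have s1 : \sum_(i.+1 <= j < n) nf c j <= \sum_(j < n) c ord0 j.
  have -> : \sum_(j < n) c ord0 j = \sum_(0 <= j < n) nf c j.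
    by rewrite sum_nf; apply: eq_bigr => j _; rewrite nfE.
  rewrite (@big_cat_nat _ _ _ i.+1 0 n) //=.
  have : 0 <= \sum_(0 <= j < i.+1) nf c j by apply: sumr_ge0 => j _.
  lra.
have s2 : d ord0 i <= \sum_(j < n) d ord0 j.
  rewrite (bigD1 i) //=; have : 0 <= \sum_(j < n | j != i) d ord0 j.
    by apply: sumr_ge0 => j _.
  lra.
have s3 : 0 <= \sum_(j < n) c ord0 j by apply: sumr_ge0 => j _; exact: hc0.
have s4 : 0 <= \sum_(j < n) d ord0 j by apply: sumr_ge0 => j _; exact: hd0.
rewrite ler_norml; apply/andP; split.
  move: h1 s2 hC s3 s4. lra.
move: h2 s1 s4. lra.
Qed.

End Conn.

Lemma lip_cont (T : topologicalType) (R : realType) (m : nat) (F : T -> R)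
  (g : 'I_m -> T -> R) (K : R) :
  (forall i, continuous (g i)) ->
  (forall t t0, `|F t0 - F t| <= K * \sum_(i < m) `|g i t0 - g i t|) ->
  continuous F.
Proof.
move=> gc h t0; apply/cvgrPdist_lt => e e0.
pose K' := `|K| * m%:R + 1.
have K'0 : 0 < K' by rewrite /K'; apply: ltr_pwDr => //; apply: mulr_ge0.
have ee : 0 < e / K' by apply: divr_gt0.
have : \forall t \near t0, forall i, `|g i t0 - g i t| < e / K'.
  apply: filter_forall => i; have := gc i t0.
  by move/cvgrPdist_lt => /(_ _ ee).
apply: filterS => t ht.
apply: le_lt_trans (h t t0) _.
have hs : \sum_(i < m) `|g i t0 - g i t| <= m%:R * (e / K').
  apply: le_trans (ler_sum _ (fun i _ => ltW (ht i))) _.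
  by rewrite sumr_const card_ord mulr_natl.
have hs0 : 0 <= \sum_(i < m) `|g i t0 - g i t| by apply: sumr_ge0.
have eK : e = (e / K') * K' by rewrite divfK // gt_eqF.
have k1 : K * \sum_(i < m) `|g i t0 - g i t| <= `|K| * \sum_(i < m) `|g i t0 - g i t|.
  by apply: ler_wpM2r => //; exact: ler_norm.
have k2 : `|K| * \sum_(i < m) `|g i t0 - g i t| <= `|K| * (m%:R * (e / K')).
  by apply: ler_wpM2l.
apply: le_lt_trans (le_trans k1 k2) _.
rewrite [X in _ < X]eK /K'.
set a := e / K'; set b := `|K|; set N := m%:R.
have : 0 < a by []. nra.
Qed.

Lemma powc (R : realType) (s : R) : 0 < s -> continuous (fun t : R => `|t| `^ s).
Proof.
move=> s0 t0.
have [->|t00] := eqVneq t0 0.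
  apply/cvgrPdist_lt => e e0.
  pose del := e `^ s^-1.
  have del0 : 0 < del by apply: powR_gt0.
  have : \forall t \near (0:R), `|0 - t| < del.
    by have := @cvg_id _ (nbhs (0:R)); move/cvgrPdist_lt => /(_ _ del0).
  apply: filterS => t ht.
  rewrite normr0 powR0 ?gt_eqF // sub0r normrN ger0_norm ?powR_ge0 //.
  have -> : e = del `^ s.
    by rewrite /del -powRrM mulVf ?gt_eqF // powRr1 // ltW.
  apply: gt0_ltr_powR => //; rewrite ?inE ?nnegrE ?normr_ge0 ?ltW //.
  by move: ht; rewrite sub0r normrN.
apply: (@continuous_comp _ _ _ (Num.Def.normr : R -> R) (fun x => x `^ s)).
  exact: norm_continuous.
apply: differentiable_continuous; apply/derivable1_diffP.
by apply: derivable_powR; rewrite in_itv /= andbT normr_gt0.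
Qed.

Lemma norm1 (R : realType) m (x : 'I_m -> R) (r : R) :
  (forall i, 0 <= x i) -> 0 < r -> 0 < (\sum_i x i `^ r) `^ r^-1 ->
  \sum_i (x i / (\sum_i x i `^ r) `^ r^-1) `^ r = 1.
Proof.
move=> x0 r0; set X := \sum_i x i `^ r; set g := X `^ r^-1 => g0.
have X0 : 0 <= X by apply: sumr_ge0 => i _; exact: powR_ge0.
have gr : g `^ r = X by rewrite /g -powRrM mulVf ?gt_eqF // powRr1.
have Xn0 : X != 0 by rewrite -gr powR_eq0 negb_and gt_eqF.
have e i : (x i / g) `^ r = x i `^ r * X^-1.
  rewrite powRM // ?invr_ge0 ?ltW //.
  by rewrite -powR_inv1 ?ltW // powRAC powR_inv1 ?powR_ge0 // gr.
under eq_bigr do rewrite e.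
by rewrite -mulr_suml mulfV.
Qed.

Lemma hold (R : realType) m (a b : 'I_m -> R) (p q : R) :
  0 < p -> 0 < q -> p^-1 + q^-1 = 1 ->
  (forall i, 0 <= a i) -> (forall i, 0 <= b i) ->
  \sum_i a i * b i <= (\sum_i a i `^ p) `^ p^-1 * (\sum_i b i `^ q) `^ q^-1.
Proof.
move=> p0 q0 pq a0 b0.
set A := \sum_i a i `^ p; set B := \sum_i b i `^ q.
set al := A `^ p^-1; set be := B `^ q^-1.
have zero (x : 'I_m -> R) (r : R) : (forall i, 0 <= x i) -> 0 < r ->
    (\sum_i x i `^ r) `^ r^-1 = 0 -> forall i, x i = 0.
  move=> x0 r0 /eqP; rewrite powR_eq0 invr_eq0 (gt_eqF r0) /= andbT => /eqP h i.
  apply: (@powR_eq0_eq0 _ _ r).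
  exact: (@psumr_eq0P R _ xpredT (fun j => x j `^ r) (fun j _ => powR_ge0 _ _) h i isT).
have [al0|al0] := eqVneq al 0.
  have z := zero a p a0 p0 al0.
  rewrite big1 ?mulr_ge0 ?powR_ge0 // => i _; by rewrite z mul0r.
have [be0|be0] := eqVneq be 0.
  have z := zero b q b0 q0 be0.
  rewrite big1 ?mulr_ge0 ?powR_ge0 // => i _; by rewrite z mulr0.
have alp : 0 < al by rewrite lt0r al0 powR_ge0.
have bep : 0 < be by rewrite lt0r be0 powR_ge0.
have key i : a i * b i <= al * be *
    ((a i / al) `^ p / p + (b i / be) `^ q / q).
  have := conjugate_powR (divr_ge0 (a0 i) (ltW alp)) (divr_ge0 (b0 i) (ltW bep)) p0 q0 pq.
  move=> h; have := ler_wpM2l (mulr_ge0 (ltW alp) (ltW bep)) h.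
  suff -> : al * be * (a i / al * (b i / be)) = a i * b i by [].
  rewrite mulrACA (mulrCA al) (mulfV al0) (mulrCA be) (mulfV be0).
  by rewrite !mulr1.
apply: le_trans (ler_sum _ (fun i _ => key i)) _.
have e1 : \sum_i (a i / al) `^ p = 1 := norm1 a0 p0 alp.
have e2 : \sum_i (b i / be) `^ q = 1 := norm1 b0 q0 bep.
rewrite -mulr_sumr.
have -> : \sum_i ((a i / al) `^ p / p + (b i / be) `^ q / q) = 1.
  rewrite big_split /= -mulr_suml. rewrite -mulr_suml. transitivity (1 / p + 1 / q); last by rewrite !mul1r. congr (_ / p + _ / q). exact: e1. exact: e2.
by rewrite mulr1.
Qed.

Lemma closed_family (T : topologicalType) (R : realType) (I : Type) (P : I -> Prop)
  (f : I -> T -> R) (a : I -> R) :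
  (forall k, continuous (f k)) ->
  closed [set y | forall k, P k -> f k y <= a k].
Proof.
move=> fc.
have -> : [set y | forall k, P k -> f k y <= a k] =
    \bigcap_(k in P) (f k @^-1` [set x | x <= a k]).
  by apply/seteqP; split=> y /= h.
apply: closed_bigI => k _.
by move/continuous_closedP: (fc k); apply; exact: closed_le.
Qed.

Lemma snd_cont (R : realType) n (i : 'I_n) :
  continuous (fun z : 'rV[R]_n * 'rV[R]_n => z.2 ord0 i).
Proof.
move=> z; apply: (@continuous_comp _ _ _ snd (fun M : 'rV[R]_n => M ord0 i)).
  exact: cvg_snd.
exact: coord_continuous.
Qed.

Lemma fst_cont (R : realType) n (i : 'I_n) :
  continuous (fun z : 'rV[R]_n * 'rV[R]_n => z.1 ord0 i).
Proof.
move=> z; apply: (@continuous_comp _ _ _ fst (fun M : 'rV[R]_n => M ord0 i)).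
  exact: cvg_fst.
exact: coord_continuous.
Qed.

Lemma lq_cont (R : realType) n (q : \bar R) :
  (q = +oo%E \/ exists r : R, q = r%:E /\ 0 < r) ->
  continuous (@lqnorm R n q).
Proof.
case=> [->|[r [-> r0]]].
  apply: (lip_cont (g := fun i (y : 'rV[R]_n) => y ord0 i) (K := 1)).
    move=> i; exact: coord_continuous.
  move=> t t0; rewrite mul1r /=.
  have hb (a b : 'rV[R]_n) : \big[Num.max/0]_(i < n) `|a ord0 i| <=
     \big[Num.max/0]_(i < n) `|b ord0 i| + \sum_(i < n) `|a ord0 i - b ord0 i|.
    have s0 : 0 <= \sum_(i < n) `|a ord0 i - b ord0 i| by apply: sumr_ge0.
    have m0 : 0 <= \big[Num.max/0]_(i < n) `|b ord0 i|.
      by apply: (big_ind (fun x => 0 <= x)) => // x y hx hy; rewrite le_max hx.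
    apply: bigmax_le => [|i _]; first by apply: addr_ge0.
    have h1 : `|b ord0 i| <= \big[Num.max/0]_(i < n) `|b ord0 i|.
      exact: (le_bigmax _ (fun i => `|b ord0 i|) i).
    have h2 : `|a ord0 i - b ord0 i| <= \sum_(i < n) `|a ord0 i - b ord0 i|.
      rewrite (bigD1 i) //= lerDl; by apply: sumr_ge0.
    have h3 : `|a ord0 i| <= `|b ord0 i| + `|a ord0 i - b ord0 i|.
      by rewrite -[X in `|X|](subrK (b ord0 i)) addrC ler_normD.
    lra.
  have e1 := hb t0 t; have e2 := hb t t0.
  have e3 : \sum_(i < n) `|t ord0 i - t0 ord0 i| = \sum_(i < n) `|t0 ord0 i - t ord0 i|.
    by apply: eq_bigr => i _; rewrite distrC.
  rewrite ler_norml; apply/andP; split; lra.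
have -> : @lqnorm R n r%:E = fun y => `|\sum_(i < n) `|y ord0 i| `^ r| `^ r^-1.
  apply: funext => y /=; rewrite ger0_norm //.
  by apply: sumr_ge0 => i _; exact: powR_ge0.
move=> y.
apply: (@continuous_comp _ _ _ (fun y : 'rV[R]_n => \sum_(i < n) `|y ord0 i| `^ r)
   (fun t => `|t| `^ r^-1)); last by apply: powc; rewrite invr_gt0.
apply: (lip_cont (g := fun i (y : 'rV[R]_n) => `|y ord0 i| `^ r) (K := 1)).
  move=> i z; apply: (@continuous_comp _ _ _ (fun M : 'rV[R]_n => M ord0 i)
     (fun t => `|t| `^ r)); first exact: coord_continuous.
  exact: powc.
move=> t t0; rewrite mul1r -sumrB; exact: ler_norm_sum.
Qed.

Lemma lq_holder (R : realType) n (p : R) (q : \bar R) (y z : 'rV[R]_n) :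
  1 <= p ->
  (q = +oo%E /\ p = 1) \/ (exists r : R, q = r%:E /\ 1 <= r /\ p^-1 + r^-1 = 1) ->
  `|\sum_(i < n) y ord0 i * z ord0 i| <= lqnorm q y * lqnorm p%:E z.
Proof.
move=> p1 hq; apply: le_trans (ler_norm_sum _ _ _) _.
under eq_bigr do rewrite normrM.
case: hq => [[-> ->]|[r [-> [r1 pr]]]].
  rewrite /= invr1 powRr1; last by apply: sumr_ge0 => i _; exact: powR_ge0.
  under [X in _ <= _ * X]eq_bigr do rewrite powRr1 ?normr_ge0 //.
  rewrite mulr_sumr; apply: ler_sum => i _; apply: ler_wpM2r => //.
  exact: (le_bigmax _ (fun i => `|y ord0 i|) i).
rewrite /=; apply: hold => //.
- by apply: lt_le_trans r1.
- by apply: lt_le_trans p1.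
- by rewrite addrC.
Qed.

Lemma Y_closed (R : realType) n (c d : 'rV[R]_n) (C : R) : closed (Yset c d C).
Proof.
have c1 := @closed_family _ R _ (fun _ : 'I_n => True)
   (fun i (y : 'rV[R]_n) => - y ord0 i) (fun i => d ord0 i)
   (fun i x => continuousN (@coord_continuous _ _ _ _ _ x)).
have c2 := @closed_family _ R _ (fun k : 'I_n * 'I_n => val k.2 = (val k.1).+1)
   (fun k (y : 'rV[R]_n) => y ord0 k.1 - y ord0 k.2) (fun k => c ord0 k.2)
   (fun k x => continuousB (@coord_continuous _ _ _ _ _ x) (@coord_continuous _ _ _ _ _ x)).
have c3 := @closed_family _ R _ (fun i : 'I_n => (val i).+1 = n)
   (fun i (y : 'rV[R]_n) => y ord0 i) (fun=> C)
   (fun i x => @coord_continuous _ _ _ _ _ x).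
have := closedI c1 (closedI c2 c3).
congr closed; apply/seteqP; split=> y /=.
  move=> [h1 [h2 h3]]; split; first by move=> i; exact: h1.
  split; first by move=> i j ij; exact: (h2 (i, j)).
  exact: h3.
move=> [h1 [h2 h3]]; split; first by move=> i _; exact: h1.
split; first by move=> [i j] /= ij; exact: h2.
exact: h3.
Qed.

Unset Implicit Arguments. Set Strict Implicit.

Theorem lemma5 (R : realType) (n : nat) (T : R) (c d : 'rV[R]_n) (C : R)
  (U : set 'rV[R]_n) (p : R) (q : \bar R) :
  (1 <= n)%N -> 0 < T ->
  (forall i : 'I_n, 0 <= c ord0 i) -> (forall i : 'I_n, 0 <= d ord0 i) -> 0 <= C ->
  (forall i j : 'I_n, val j = (val i).+1 -> d ord0 j - d ord0 i <= c ord0 j) ->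
  1 <= p ->
  (q = +oo%E /\ p = 1) \/ (exists r : R, q = r%:E /\ 1 <= r /\ p^-1 + r^-1 = 1) ->
  {within [set su : 'rV[R]_n * 'rV[R]_n | Sset T su.1 /\ U su.2],
     continuous (fun su : 'rV[R]_n * 'rV[R]_n => fval c d C su.1 su.2)} /\
  exists L : R,
    (exists2 y, Yset c d C y & lqnorm q y = L) /\
    (forall y, Yset c d C y -> lqnorm q y <= L) /\
    (forall s, Sset T s -> forall u1 u2, U u1 -> U u2 ->
       `|fval c d C s u1 - fval c d C s u2| <= L * lqnorm p%:E (u1 - u2)).
Proof.
move=> n1 T0 hc0 hd0 hC hcd p1 hq.
set Bd := C + \sum_(j < n) c ord0 j + \sum_(j < n) d ord0 j.
have Bd0 : 0 <= Bd.
  apply: addr_ge0; first apply: addr_ge0 => //.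
    by apply: sumr_ge0 => j _.
  by apply: sumr_ge0 => j _.
have diff s u s' u' : exists y, Yset c d C y /\
    fval c d C s u - fval c d C s' u' <=
    \sum_(i < n) y ord0 i * ((u ord0 i - s ord0 i) - (u' ord0 i - s' ord0 i)).
  have [[y [yY ->]] _] := fval_dual hC hd0 hcd s u.
  have [_ h] := fval_dual hC hd0 hcd s' u'.
  exists y; split => //.
  have hy := h y yY.
  under [X in _ <= X]eq_bigr do rewrite mulrBr.
  rewrite sumrB; lra.
have bnd (y : 'rV[R]_n) (dl : 'I_n -> R) : Yset c d C y ->
    \sum_(i < n) y ord0 i * dl i <= Bd * \sum_(i < n) `|dl i|.
  move=> yY; rewrite mulr_sumr; apply: ler_sum => i _.
  apply: le_trans (ler_norm _) _; rewrite normrM; apply: ler_wpM2r => //.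
  exact: (Y_bound hC hd0 hc0 yY i).
split.
  apply: continuous_subspaceT.
  apply: (lip_cont (g := fun i (z : 'rV[R]_n * 'rV[R]_n) => z.2 ord0 i - z.1 ord0 i)
     (K := Bd)).
    by move=> i z; apply: continuousB; [exact: snd_cont | exact: fst_cont].
  move=> t t0.
  have [y1 [Y1 h1]] := diff t0.1 t0.2 t.1 t.2.
  have [y2 [Y2 h2]] := diff t.1 t.2 t0.1 t0.2.
  have b1 := bnd _ (fun i => (t0.2 ord0 i - t0.1 ord0 i) - (t.2 ord0 i - t.1 ord0 i)) Y1.
  have b2 := bnd _ (fun i => (t.2 ord0 i - t.1 ord0 i) - (t0.2 ord0 i - t0.1 ord0 i)) Y2.
  have e : \sum_(i < n) `|(t.2 ord0 i - t.1 ord0 i) - (t0.2 ord0 i - t0.1 ord0 i)| =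
     \sum_(i < n) `|(t0.2 ord0 i - t0.1 ord0 i) - (t.2 ord0 i - t.1 ord0 i)|.
    by apply: eq_bigr => i _; rewrite distrC.
  move: b1 b2; rewrite /= e => b1 b2.
  rewrite ler_norml; apply/andP; split; lra.
have Y0 : Yset c d C 0.
  split; first by move=> i; rewrite mxE oppr0.
  split; first by move=> i j _; rewrite !mxE subr0.
  by move=> i _; rewrite mxE.
have Yb : [bounded x | x in Yset c d C].
  rewrite /bounded_near; near=> M => y yY /=.
  rewrite -[leLHS]/(mx_norm y) mx_normrE.
  apply: bigmax_le => [|ij _]; first by near: M; apply: nbhs_pinfty_ge; exact: num_real.
  rewrite /= (ord1 ij.1); apply: le_trans (Y_bound hC hd0 hc0 yY _) _.
  by near: M; apply: nbhs_pinfty_ge; exact: num_real.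
have Ycp : compact (Yset c d C) by apply: bounded_closed_compact => //; exact: Y_closed.
have qc : continuous (@lqnorm R n q).
  apply: lq_cont; case: hq => [[-> _]|[r [-> [r1 _]]]]; [left | right] => //.
  by exists r; split => //; apply: lt_le_trans r1.
have [y0 y0Y ymax] := compact_EVT_max (ex_intro _ 0 Y0) Ycp (continuous_subspaceT qc).
exists (lqnorm q y0); split; first by exists y0 => //; exact: set_mem.
split; first by move=> y yY; apply: ymax; exact: mem_set.
move=> s _ u1 u2 _ _.
have [y1 [Y1 h1]] := diff s u1 s u2.
have [y2 [Y2 h2]] := diff s u2 s u1.
have lp0 : 0 <= lqnorm p%:E (u1 - u2) by exact: powR_ge0.
have hb (y : 'rV[R]_n) : Yset c d C y ->
    `|\sum_(i < n) y ord0 i * (u1 - u2) ord0 i| <= lqnorm q y0 * lqnorm p%:E (u1 - u2).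
  move=> yY; apply: le_trans (lq_holder _ _ p1 hq) _.
  by apply: ler_wpM2r => //; apply: ymax; exact: mem_set.
have e1 : \sum_(i < n) y1 ord0 i * ((u1 ord0 i - s ord0 i) - (u2 ord0 i - s ord0 i)) =
    \sum_(i < n) y1 ord0 i * (u1 - u2) ord0 i.
  by apply: eq_bigr => i _; rewrite !mxE; congr (_ * _); lra.
have e2 : \sum_(i < n) y2 ord0 i * ((u2 ord0 i - s ord0 i) - (u1 ord0 i - s ord0 i)) =
    - \sum_(i < n) y2 ord0 i * (u1 - u2) ord0 i.
  rewrite -sumrN; apply: eq_bigr => i _; rewrite !mxE; lra.
have b1 := hb _ Y1; have b2 := hb _ Y2.
move: h1 h2; rewrite e1 e2 => h1 h2.
have := ler_norm (\sum_(i < n) y1 ord0 i * (u1 - u2) ord0 i).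
have := ler_norm (- \sum_(i < n) y2 ord0 i * (u1 - u2) ord0 i).
rewrite normrN => k2 k1.
rewrite ler_norml; apply/andP; split; lra.
Unshelve. all: by end_near.
Qed.
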